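(* A reflexive oriented graph $D$ is transitive if and only if $G=\mathrm{Split}(D)$ is WDI. Furthermore, if $G$ is WDI, then the perfect matching $M=\{\mathrm{out}(v)\to\mathrm{in}(v)\mid v\in V(D)\}$ is exactly the set of disimplicial arcs of $G$.
   Context: A digraph is a finite vertex set $V$ with arc set $E\subseteq V\times V$ (loops allowed). $D$ is reflexive if $v\to v\in E$ for all $v$; oriented if $v\to w$ and $w\to v$ are both arcs only when $v=w$; a vertex $v$ is transitive if $x\to y$ is an arc for every in-neighbor $x$ and out-neighbor $y$ of $v$, and $D$ is transitive if all vertices are. Source: no in-neighbors; sink: no out-neighbors. $\mathrm{Split}(D)$ has a vertex $\mathrm{out}(v)$ for each non-sink $v$ and a vertex $\mathrm{in}(w)$ for each non-source $w$ (all distinct), with $\mathrm{out}(v)\to\mathrm{in}(w)$ an arc iff $v\to w\in E(D)$, no other arcs. A diclique is a pair $(V,W)$ of nonempty vertex sets, written $V\to W$, with $v\to w$ an arc for all $v\in V$, $w\in W$; an arc $v\to w$ belongs to it if $v\in V$, $w\in W$. It is maximal if it is not properly contained (componentwise) in another diclique. An arc $v\to w$ is disimplicial if $x\to y$ is an arc for all in-neighbors $x$ of $w$ and out-neighbors $y$ of $v$. A reduced diclique is a maximal diclique containing a disimplicial arc. A digraph is weakly diclique irreducible (WDI) if every arc belongs to some reduced diclique. *)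

(* Defs.v *)
From mathcomp Require Import all_boot.
Set Implicit Arguments. Unset Strict Implicit. Unset Printing Implicit Defensive.

Section Digraphs.
Variables (T : finType) (E : rel T).

Definition reflexive_dg : Prop := forall v, E v v.
Definition oriented_dg : Prop := forall v w, E v w -> E w v -> v = w.
Definition transitive_vertex (v : T) : Prop :=
  forall x y, E x v -> E v y -> E x y.
Definition transitive_dg : Prop := forall v, transitive_vertex v.
Definition is_source (v : T) : bool := [forall x, ~~ E x v].
Definition is_sink (v : T) : bool := [forall y, ~~ E v y].

Definition diclique (A B : {set T}) : Prop :=
  A != set0 /\ B != set0 /\ (forall v w, v \in A -> w \in B -> E v w).
Definition maximal_diclique (A B : {set T}) : Prop :=
  diclique A B /\
  forall A' B', diclique A' B' -> A \subset A' -> B \subset B' -> A = A' /\ B = B'.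
Definition disimplicial (v w : T) : Prop :=
  E v w /\ forall x y, E x w -> E v y -> E x y.
Definition reduced_diclique (A B : {set T}) : Prop :=
  maximal_diclique A B /\ exists v w, [/\ v \in A, w \in B & disimplicial v w].
Definition WDI : Prop :=
  forall v w, E v w -> exists A B, [/\ reduced_diclique A B, v \in A & w \in B].
End Digraphs.

(* Split(D): vertices out(v) = inl v for non-sink v, in(w) = inr w for non-source w. *)
Section Split.
Variables (V : finType) (E : rel V).
Definition split_vertex (x : V + V) : bool :=
  match x with inl v => ~~ is_sink E v | inr w => ~~ is_source E w end.
Definition split_type : finType := {x : V + V | split_vertex x}.
Definition split_arc : rel split_type := fun x y =>
  match val x, val y with inl v, inr w => E v w | _, _ => false end.
End Split.

(* Main.v *)
Require Import Defs.
From mathcomp Require Import all_boot.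

Lemma nsink {V : finType} {E : rel V} (H : reflexive_dg E) v : split_vertex E (inl v).
Proof. rewrite /= /is_sink; apply/forallPn; exists v; by rewrite negbK. Qed.

Lemma nsource {V : finType} {E : rel V} (H : reflexive_dg E) v : split_vertex E (inr v).
Proof. rewrite /= /is_source; apply/forallPn; exists v; by rewrite negbK. Qed.

Definition outv {V : finType} {E : rel V} (H : reflexive_dg E) v : split_type E :=
  exist _ (inl v) (nsink H v).
Definition inv {V : finType} {E : rel V} (H : reflexive_dg E) v : split_type E :=
  exist _ (inr v) (nsource H v).

Lemma disimpl_char {V : finType} {E : rel V} (H : reflexive_dg E) (O : oriented_dg E)
  (x y : split_type E) :
  disimplicial (@split_arc V E) x y <->
  exists v, [/\ val x = inl v, val y = inr v & transitive_vertex E v].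
Proof.
split.
- move=> [Hxy Hd].
  move: Hxy Hd; case: x => [[v|v] pv]; case: y => [[w|w] pw] //= Hvw Hd.
  have Hwv : E w v.
    exact: (Hd (outv H w) (inv H v) (H w) (H v)).
  have evw := O v w Hvw Hwv; subst w.
  exists v; split => // a b Hav Hvb.
  exact: (Hd (outv H a) (inv H b) Hav Hvb).
- move=> [v [Hx Hy Ht]].
  split; first by rewrite /split_arc Hx Hy; apply: H.
  move=> x' y'; rewrite /split_arc Hx Hy.
  case: x' => [[a|a] pa]; case: y' => [[b|b] pb] //= Hav Hvb.
  exact: Ht.
Qed.

Theorem theorem13 (V : finType) (E : rel V) :
  reflexive_dg E -> oriented_dg E ->
  (transitive_dg E <-> WDI (@split_arc V E)) /\
  (WDI (@split_arc V E) ->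
   forall x y : split_type E,
     disimplicial (@split_arc V E) x y <-> exists v : V, val x = inl v /\ val y = inr v).
Proof.
move=> H O.
have WT : WDI (@split_arc V E) -> transitive_dg E.
  move=> W v.
  have := W (outv H v) (inv H v) (H v).
  move=> [A [B [[[[_ [_ Hd]] _] [u [w [uA wB Huw]]]] vA vB]]].
  have [c [Hu Hw Hc]] := (disimpl_char H O u w).1 Huw.
  have e1 : E v c by have := Hd _ _ vA wB; rewrite /split_arc /= Hw.
  have e2 : E c v by have := Hd _ _ uA vB; rewrite /split_arc /= Hu.
  by rewrite (O v c e1 e2).
split.
- split; last exact: WT.
  move=> Tr x y Hxy.
  move: Hxy; case: x => [[v|v] pv]; case: y => [[w|w] pw] //= Hvw.
  set A := [set z : split_type E | if val z is inl a then E a v else false].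
  set B := [set z : split_type E | if val z is inr b then E v b else false].
  have oA : outv H v \in A by rewrite inE /=; apply: H.
  have iB : inv H v \in B by rewrite inE /=; apply: H.
  have dAB : diclique (@split_arc V E) A B.
    split; first by apply/set0Pn; exists (outv H v).
    split; first by apply/set0Pn; exists (inv H v).
    move=> z1 z2; rewrite !inE /split_arc.
    case: (val z1) => // a; case: (val z2) => // b Hav Hvb.
    exact: (Tr v a b Hav Hvb).
  exists A, B; split.
  + split.
    * split => // A' B' [_ [_ Hd']] sA sB.
      have oA' := subsetP sA _ oA; have iB' := subsetP sB _ iB.
      split; apply/eqP; rewrite eqEsubset ?sA ?sB /=; apply/subsetP => z zz.
      -- have := Hd' _ _ zz iB'; rewrite inE /split_arc /=.
         by case: (val z).
      -- have := Hd' _ _ oA' zz; rewrite inE /split_arc /=.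
         by case: (val z).
    * exists (outv H v), (inv H v); split => //.
      apply/(disimpl_char H O); exists v; split => //; exact: Tr.
  + by rewrite inE /=; apply: H.
  + by rewrite inE /=.
- move=> W x y; have Tr := WT W.
  split.
  + by move/(disimpl_char H O) => [v [? ? _]]; exists v.
  + by move=> [v [? ?]]; apply/(disimpl_char H O); exists v; split => //; apply: Tr.
Qed.
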